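(* Let $d\ge2$, $s_n=2(\log n)^2$, $s_{n,+}=(3s_n)^d$ and $W_{s_{n,+}}=[-s_{n,+}^{1/d}/2,s_{n,+}^{1/d}/2]^d$. If $\varepsilon>0$ is sufficiently small, then $$\big|\{(x_0,x_1,x_2)\in W_{s_{n,+}}^3:\ d_{01}<d_{012}\le d_{01}+n^{-2+\varepsilon}\}\big|\in O(n^{-1/4})\quad(n\to\infty),$$ where $|\cdot|$ denotes Lebesgue measure on $(\mathbb R^d)^3$.
   Context: $d_{01}=|x_0-x_1|/2$, and $d_{012}=\inf\{r>0: B_r(x_0)\cap B_r(x_1)\cap B_r(x_2)\ne\varnothing\}$ is the Čech filtration time of the triangle $\{x_0,x_1,x_2\}$. *)

(* Defs.v *)
From HB Require Import structures.
From mathcomp Require Import all_boot all_order all_algebra.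
From mathcomp Require Import all_classical all_reals all_analysis.
Set Implicit Arguments. Unset Strict Implicit. Unset Printing Implicit Defensive.
Import Order.TTheory GRing.Theory Num.Theory.
Import numFieldNormedType.Exports.
Local Open Scope classical_set_scope.
Local Open Scope ring_scope.

Section Defs.
Variables (R : realType).

Definition box {I : finType} (a b : I -> R) : set (I -> R) :=
  [set x | forall i, a i <= x i <= b i].

Definition box_vol {I : finType} (a b : I -> R) : R :=
  \prod_(i : I) (b i - a i).

(* Lebesgue (outer) measure on R^I: infimum of the total volume of countable
   covers by closed boxes.  On Lebesgue measurable sets (e.g. Borel sets)
   this is the Lebesgue measure. *)
Definition lebesgue_outer {I : finType} (A : set (I -> R)) : \bar R :=
  ereal_inf [set (\sum_(0 <= k <oo) (box_vol (ab.1 k) (ab.2 k))%:E)%E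
            | ab in [set ab : (nat -> I -> R) * (nat -> I -> R) |
                      (forall k i, ab.1 k i <= ab.2 k i) /\
                      A `<=` \bigcup_k box (ab.1 k) (ab.2 k)]].

Definition edist {d : nat} (x y : 'I_d -> R) : R :=
  Num.sqrt (\sum_(k < d) (x k - y k) ^+ 2).

Definition d01 {d : nat} (x0 x1 : 'I_d -> R) : R := edist x0 x1 / 2.

Definition d012 {d : nat} (x0 x1 x2 : 'I_d -> R) : R :=
  inf [set r : R | 0 < r /\ exists y : 'I_d -> R,
         edist x0 y <= r /\ edist x1 y <= r /\ edist x2 y <= r].

Definition Wcube (d : nat) (s : R) : set ('I_d -> R) :=
  [set x | forall k, `|x k| <= powR s (d%:R^-1) / 2].

Definition s_n (n : nat) : R := 2 * (ln (n%:R)) ^+ 2.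
Definition s_plus (d n : nat) : R := (3 * s_n n) ^+ d.

(* The set of triples (x0,x1,x2) in W^3 with d01 < d012 <= d01 + n^{-2+eps},
   as a subset of R^(3 x d), triple component j, coordinate k = p (j, k). *)
Definition triple {d : nat} (p : 'I_3 * 'I_d -> R) (j : 'I_3) : 'I_d -> R :=
  fun k => p (j, k).

Definition bad_set (d n : nat) (eps : R) : set ('I_3 * 'I_d -> R) :=
  [set p | (forall j, @Wcube d (s_plus d n) (triple p j)) /\
     let x0 := triple p ord0 in
     let x1 := triple p (inord 1) in
     let x2 := triple p (inord 2) in
     d01 x0 x1 < d012 x0 x1 x2 /\
     d012 x0 x1 x2 <= d01 x0 x1 + powR (n%:R) (-2 + eps)].

End Defs.

(* Main.v *)
From HB Require Import structures.
From mathcomp Require Import all_boot all_order all_algebra.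
From mathcomp Require Import all_classical all_reals all_analysis.
From mathcomp Require Import ring lra.
Require Import Defs.
Import Order.TTheory GRing.Theory Num.Theory.
Local Open Scope classical_set_scope.
Local Open Scope ring_scope.

Section All.
Variable R : realType.


Lemma outer_le_cover (I : finType) (A : set (I -> R)) (a b : nat -> I -> R) :
  (forall k i, a k i <= b k i) -> A `<=` \bigcup_k box (a k) (b k) ->
  (lebesgue_outer A <= \sum_(0 <= k <oo) (box_vol (a k) (b k))%:E)%E.
Proof.
move=> hab hA; apply: ereal_inf_lbound; exists (a, b) => //.
Qed.

Lemma outer_le_fincover (I : finType) (i0 : I) (F : finType) (A : set (I -> R))
  (lo hi : F -> I -> R) :
  (forall x i, lo x i <= hi x i) ->
  A `<=` (fun p => exists x, box (lo x) (hi x) p) ->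
  (lebesgue_outer A <= (\sum_(x : F) box_vol (lo x) (hi x))%:E)%E.
Proof.
move=> hlh hA.
pose a k : I -> R := match (insub k : option 'I_#|F|) with
  Some i => lo (enum_val i) | None => fun _ => 0 end.
pose b k : I -> R := match (insub k : option 'I_#|F|) with
  Some i => hi (enum_val i) | None => fun _ => 0 end.
have hab : forall k i, a k i <= b k i.
  by move=> k i; rewrite /a /b; case: insubP => [i' _ _|_] //.
have hcov : A `<=` \bigcup_k box (a k) (b k).
  move=> p /hA [x hx]; exists (enum_rank x) => //.
  by rewrite /a /b valK enum_rankK.
have H := @outer_le_cover I A a b hab hcov.
apply: (le_trans H).
rewrite (nneseries_split 0 #|F|); last first.
    move=> k _; rewrite lee_fin /box_vol; apply: prodr_ge0 => i _.
    by rewrite subr_ge0.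
  rewrite eseries0 ?adde0; last first.
    move=> k; rewrite add0n => hk _; rewrite /a /b insubN ?ltnNge ?hk //.
    rewrite /box_vol (bigD1 i0) //= subrr mul0r //.
  rewrite sumEFin lee_fin add0n big_mkord.
  rewrite (eq_bigr (fun i => box_vol (lo (enum_val i)) (hi (enum_val i)))); last first.
    by move=> i _; rewrite /a /b valK.
  rewrite le_eqVlt; apply/orP; left; apply/eqP; symmetry; exact: (big_enum_val (A := predT)).
Qed.
Lemma grid_pick (K : nat) (w lo y : R) : (0 < K)%N -> 0 < w ->
  lo <= y <= lo + K%:R * w ->
  exists i : 'I_K, lo + i%:R * w <= y <= lo + i.+1%:R * w.
Proof.
elim: K => [//|k IH] _ hw /andP[h1 h2].
case: k IH h2 => [|k] IH h2.
  by exists ord0; rewrite /= mul0r addr0 h1.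
case: (leP y (lo + k.+1%:R * w)) => hy.
  have [|i hi] := IH isT hw; first by rewrite h1 hy.
  by exists (widen_ord (leqnSn _) i).
exists ord_max => /=; rewrite h2 andbT ltW //.
Qed.

Lemma grid_cover (I : finType) (i0 : I) (B l : R) (K : nat) (T : set (I -> R))
  (L : bool -> (I -> R) -> R) :
  (0 < K)%N -> 0 < B -> 0 < l ->
  (forall x, T x -> (forall i, -B <= x i <= B) /\
     forall p : I -> R, p i0 = 0 ->
       (forall i, i != i0 -> p i <= x i <= p i + 2 * B / K%:R) ->
       exists s, L s p <= x i0 <= L s p + l) ->
  (lebesgue_outer T <= (2 * (2 * B) ^+ (#|{: I}|.-1) * l)%:E)%E.
Proof.
move=> K0 B0 l0 hT.
set h := 2 * B / K%:R.
have Kpos : 0 < K%:R :> R by rewrite ltr0n.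
have h0 : 0 < h by rewrite /h divr_gt0 // mulr_gt0.
have Kh : K%:R * h = 2 * B by rewrite /h; field; rewrite gt_eqF.
pose w := l / K%:R.
have w0 : 0 < w by rewrite /w divr_gt0.
have Kw : K%:R * w = l by rewrite /w; field; rewrite gt_eqF.
pose F := ({ffun I -> 'I_K} * bool)%type.
pose corner (c : {ffun I -> 'I_K}) : I -> R :=
  fun i => if i == i0 then 0 else -B + (c i)%:R * h.
pose lo (z : F) : I -> R := fun i =>
  if i == i0 then L z.2 (corner z.1) + (z.1 i)%:R * w else -B + (z.1 i)%:R * h.
pose hi (z : F) : I -> R := fun i => lo z i + (if i == i0 then w else h).
have hlh : forall z i, lo z i <= hi z i.
  by move=> z i; rewrite /hi lerDl; case: ifP => _; apply: ltW.
have hcov : T `<=` (fun p => exists z : F, box (lo z) (hi z) p).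
  move=> x /hT [hB hP].
  have : forall i, exists j : 'I_K, -B + j%:R * h <= x i <= -B + j.+1%:R * h.
    move=> i; apply: grid_pick => //; rewrite Kh.
    by have := hB i; lra.
  case/fin_all_exists => f hf.
  pose c1 := finfun f.
  have hp0 : corner c1 i0 = 0 by rewrite /corner eqxx.
  have hpi : forall i, i != i0 -> corner c1 i <= x i <= corner c1 i + 2 * B / K%:R.
    move=> i /negbTE hii; rewrite /corner hii ffunE -/h.
    by have := hf i; rewrite mulrSr; lra.
  have [s hs] := hP _ hp0 hpi.
  have [j hj] : exists j : 'I_K,
      L s (corner c1) + j%:R * w <= x i0 <= L s (corner c1) + j.+1%:R * w.
    by apply: grid_pick => //; rewrite Kw.
  pose c := [ffun i => if i == i0 then j else f i].
  have cc : corner c = corner c1.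
    apply/funext => i; rewrite /corner; case: ifP => // hii.
    by rewrite !ffunE hii.
  exists (c, s) => i; rewrite /hi /lo /= cc.
  case: (eqVneq i i0) => [->|hii].
    by rewrite ffunE eqxx; move: hj; rewrite mulrSr; lra.
  by rewrite ffunE (negbTE hii); move: (hf i); rewrite mulrSr; lra.
have H := @outer_le_fincover I i0 F T lo hi hlh hcov.
apply: (le_trans H).
rewrite lee_fin.
have hv : forall z, box_vol (lo z) (hi z) = w * h ^+ #|I|.-1.
  move=> z; rewrite /box_vol (bigD1 i0) //= /hi addrAC subrr add0r eqxx.
  congr (_ * _).
  rewrite (eq_bigr (fun _ => h)); last by move=> i /negbTE ->; rewrite addrAC subrr add0r.
  by rewrite prodr_const cardC1.
rewrite (eq_bigr (fun _ => w * h ^+ #|I|.-1)); last by move=> z _; apply: hv.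
rewrite sumr_const card_prod card_ffun card_bool card_ord.
have : (0 < #|I|)%N by apply/card_gt0P; exists i0.
case: #|I| => [//|N] _ /=.
rewrite -[_ *+ _]mulr_natr natrM natrX exprS.
rewrite le_eqVlt; apply/orP; left; apply/eqP.
rewrite /w /h expr_div_n; field.
by rewrite expf_neq0 // gt_eqF.
Qed.


Lemma sqrt_add_le (D X : R) : 0 <= D ->
  Num.sqrt (D + X) <= Num.sqrt D + Num.sqrt X.
Proof.
move=> D0; case: (leP X 0) => hX.
  apply: (le_trans (y := Num.sqrt D)); last by rewrite lerDl sqrtr_ge0.
  by rewrite ler_sqrt //; lra.
have hsq : D + X <= (Num.sqrt D + Num.sqrt X) ^+ 2.
  rewrite sqrrD !sqr_sqrtr //; last exact: ltW.
  have := mulr_ge0 (sqrtr_ge0 D) (sqrtr_ge0 X); lra.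
rewrite -(@ger0_norm _ (Num.sqrt D + Num.sqrt X)); last first.
  by rewrite addr_ge0 // sqrtr_ge0.
by rewrite -sqrtr_sqr ler_sqrt // sqr_ge0.
Qed.

Lemma interval_lemma (t mx mp gx gp tau kap h : R) :
  0 < (t - mx) ^+ 2 + gx -> (t - mx) ^+ 2 + gx <= tau ->
  `|mx - mp| <= h -> `|gx - gp| <= kap -> 0 <= kap -> 0 <= tau ->
  let s1 := Num.sqrt (- gp - kap) in
  let l := Num.sqrt (tau + 2 * kap) + 2 * h in
  (mp + s1 - h <= t <= mp + s1 - h + l) \/
  (mp - s1 + h - l <= t <= mp - s1 + h).
Proof.
move=> f0 f1 hm hg k0 t0 s1 l.
set w := t - mx.
have hw1 : s1 <= `|w|.
  rewrite -sqrtr_sqr ler_sqrt ?sqr_ge0 //.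
  by move: hg; rewrite ler_norml /w => /andP[]; lra.
have hw2 : `|w| <= Num.sqrt (tau + 2 * kap) + s1.
  rewrite -sqrtr_sqr.
  apply: (le_trans (y := Num.sqrt (tau + 2 * kap + (- gp - kap)))).
    have := sqr_ge0 (t - mx); move: hg; rewrite ler_norml => /andP[] *; rewrite ler_sqrt /w; lra.
  by apply: sqrt_add_le; lra.
move: hm; rewrite ler_norml => /andP[hm1 hm2].
case: (leP 0 w) => hw.
  left; move: hw1 hw2; rewrite ger0_norm // /l /w; lra.
right; move: hw1 hw2; rewrite ltr0_norm // /l /w; lra.
Qed.

Lemma prod_lip (a b a' b' e M : R) :
  `|a - a'| <= e -> `|b - b'| <= e -> `|b| <= M -> `|a'| <= M ->
  `|a * b - a' * b'| <= 2 * e * M.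
Proof.
move=> ha hb hb2 ha2.
have -> : a * b - a' * b' = (a - a') * b + a' * (b - b') by ring.
apply: (le_trans (ler_normD _ _)); rewrite !normrM.
have e0 : 0 <= e by apply: le_trans ha.
have h1 : `|a - a'| * `|b| <= e * M by apply: ler_pM.
have h2 : `|a'| * `|b - b'| <= M * e by apply: ler_pM.
lra.
Qed.




Lemma sq_le_of_sqrt (S r : R) : 0 <= S -> Num.sqrt S <= r -> S <= r ^+ 2.
Proof.
move=> S0 hr; have r0 : 0 <= r := le_trans (sqrtr_ge0 S) hr.
rewrite -[S](sqr_sqrtr S0) !expr2; apply: ler_pM => //; exact: sqrtr_ge0.
Qed.

Lemma sqrt_eq (a U : R) : 0 <= a -> a ^+ 2 = U -> Num.sqrt U = a.
Proof. by move=> a0 <-; rewrite sqrtr_sqr ger0_norm. Qed.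

Lemma sqr_split (v c l : R) : 0 < l ->
  (v + c) ^+ 2 <= (1 + l) * v ^+ 2 + (1 + l^-1) * c ^+ 2.
Proof.
move=> l0; rewrite -subr_ge0.
have -> : (1 + l) * v ^+ 2 + (1 + l^-1) * c ^+ 2 - (v + c) ^+ 2 = (l * v - c) ^+ 2 / l.
  by field; rewrite gt_eqF.
by rewrite divr_ge0 ?sqr_ge0 // ltW.
Qed.


Section Dim.
Variable d : nat.
Hypothesis d1 : (1 <= d)%N.
Variable k0 : 'I_d.


Definition sqd (x y : 'I_d -> R) := \sum_(k < d) (x k - y k) ^+ 2.

Lemma sqd_ge0 x y : 0 <= sqd x y.
Proof. by apply: sumr_ge0 => k _; apply: sqr_ge0. Qed.

Lemma geom (x0 x1 x2 : 'I_d -> R) (B del : R) :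
  (forall k, `|x0 k| <= B) -> (forall k, `|x1 k| <= B) ->
  0 < del -> del <= 1 ->
  d01 x0 x1 < d012 x0 x1 x2 -> d012 x0 x1 x2 <= d01 x0 x1 + del ->
  0 < \sum_(k < d) (x2 k - x0 k) * (x2 k - x1 k) /\
  \sum_(k < d) (x2 k - x0 k) * (x2 k - x1 k) <=
     Num.sqrt del * (d%:R * B + 8) ^+ 2.
Proof.
move=> hx0 hx1 del0 del1 hlt hle.
set f := \sum_(k < d) _.
pose u k := (x0 k - x1 k) / 2.
pose mv k := (x0 k + x1 k) / 2.
pose U := \sum_(k < d) u k ^+ 2.
set a := d01 x0 x1.
have a0 : 0 <= a by rewrite /a /d01 divr_ge0 // sqrtr_ge0.
have aU : a ^+ 2 = U.
  rewrite /a /d01 /edist -/(sqd _ _) expr_div_n sqr_sqrtr ?sqd_ge0 //.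
  by rewrite mulr_suml; apply: eq_bigr => k _; rewrite /u expr_div_n.
have sqrtU : Num.sqrt U = a by apply: sqrt_eq.
have hx0m : sqd x0 mv = U by apply: eq_bigr => k _; rewrite /u /mv; congr (_ ^+ 2); field.
have hx1m : sqd x1 mv = U.
  by apply: eq_bigr => k _; rewrite /u /mv; rewrite -sqrrN; congr (_ ^+ 2); field.
have hx2m : sqd x2 mv = f + U.
  by rewrite /f /U -big_split; apply: eq_bigr => k _; rewrite /u /mv /=; field.
pose E := [set r : R | 0 < r /\ exists y : 'I_d -> R,
         edist x0 y <= r /\ edist x1 y <= r /\ edist x2 y <= r].
have hd012 : d012 x0 x1 x2 = inf E by [].
have hlb : has_lbound E by exists 0 => r [] /ltW.
have hne : E !=set0.
  exists (1 + Num.sqrt (sqd x1 x0) + Num.sqrt (sqd x2 x0)); split.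
    by have := sqrtr_ge0 (sqd x1 x0); have := sqrtr_ge0 (sqd x2 x0); lra.
  exists x0; rewrite /edist -!/(sqd _ _).
  have -> : sqd x0 x0 = 0 by rewrite /sqd big1 // => j _; rewrite subrr expr0n.
  rewrite sqrtr0.
  by have := sqrtr_ge0 (sqd x1 x0); have := sqrtr_ge0 (sqd x2 x0); lra.
split.
  apply: contrapT => hN.
  have hf : f <= 0 by rewrite leNgt; apply/negP.
  suff : inf E <= a by move: hlt; rewrite hd012 -/a; lra.
  have key : forall r, a < r -> inf E <= r.
    move=> r ar; apply: (ge_inf hlb); split; first lra.
    exists mv; rewrite /edist -!/(sqd _ _) hx0m hx1m hx2m sqrtU; split; first lra.
    split; first lra.
    apply: (le_trans (y := a)); last lra.
    by rewrite -sqrtU ler_sqrt ?sqd_ge0 //; [lra | rewrite -aU sqr_ge0].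
  apply: contrapT => hN2.
  have hia : a < inf E by rewrite ltNge; apply/negP.
  have := key ((a + inf E) / 2); lra.
have hinf : has_inf E by split.
have [r Er hr] := inf_adherent del0 hinf.
case: Er => r0 [y [h0 [h1 h2]]].
rewrite /edist -!/(sqd _ _) in h0 h1 h2.
have s0 := @sq_le_of_sqrt _ _ (sqd_ge0 _ _) h0.
have s1 := @sq_le_of_sqrt _ _ (sqd_ge0 _ _) h1.
have s2 := @sq_le_of_sqrt _ _ (sqd_ge0 _ _) h2.
have hra : r <= a + 2 * del by move: hle; rewrite hd012 -/a; lra.
pose c k := y k - mv k.
pose C := \sum_(k < d) c k ^+ 2.
have C0 : 0 <= C by apply: sumr_ge0 => k _; apply: sqr_ge0.
have hsum01 : sqd x0 y + sqd x1 y = 2 * U + 2 * C.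
  rewrite /sqd /U /C -big_split !mulr_sumr -big_split; apply: eq_bigr => k _.
  by rewrite /c /u /mv /=; field.
have hCU : C <= r ^+ 2 - U by lra.
pose lam := Num.sqrt del.
have lam0 : 0 < lam by rewrite sqrtr_gt0.
have lam2 : lam ^+ 2 = del by rewrite sqr_sqrtr // ltW.
have lam1 : lam <= 1 by rewrite -(sqrtr1 R) ler_sqrt.
have hsplit : sqd x2 mv <= (1 + lam) * sqd x2 y + (1 + lam^-1) * C.
  rewrite /sqd /C !mulr_sumr -big_split; apply: ler_sum => k _ /=.
  have -> : x2 k - mv k = (x2 k - y k) + c k by rewrite /c; ring.
  exact: sqr_split.
rewrite hx2m in hsplit.
have B0 : 0 <= B by apply: le_trans (hx0 k0).
pose A := d%:R * B.
have dR : 1 <= d%:R :> R by rewrite ler1n.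
have hUB : U <= d%:R * B ^+ 2.
  rewrite mulr_natl -[X in _ <= _ *+ X]card_ord -sumr_const.
  apply: ler_sum => k _; rewrite /u.
  have := hx0 k; have := hx1 k; rewrite !ler_norml => /andP[? ?] /andP[? ?].
  nra.
have aA : a <= A.
  have : a ^+ 2 <= A ^+ 2.
    rewrite aU /A exprMn; apply: (le_trans hUB); rewrite ler_wpM2r ?sqr_ge0 //.
    by rewrite expr2 ler_peMl // (le_trans ler01).
  have A0 : 0 <= A by rewrite /A mulr_ge0 // ler0n.
  nra.
have hr2 : r ^+ 2 <= (A + 2) ^+ 2.
  have : r <= A + 2 by have : del <= 1 := del1; lra.
  move=> h; rewrite !expr2; apply: ler_pM; lra.
have hW : r ^+ 2 - a ^+ 2 <= 4 * lam ^+ 2 * (A + 1).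
  rewrite lam2.
  have -> : r ^+ 2 - a ^+ 2 = (r - a) * (r + a) by ring.
  have e1 : (r - a) * (r + a) <= (2 * del) * (r + a) by apply: ler_wpM2r; lra.
  have e2 : (2 * del) * (r + a) <= (2 * del) * (2 * A + 2) by apply: ler_wpM2l; lra.
  lra.
have hC : lam^-1 * C <= 4 * lam * (A + 1).
  have -> : 4 * lam * (A + 1) = lam^-1 * (4 * lam ^+ 2 * (A + 1)) by field; rewrite gt_eqF.
  by apply: ler_wpM2l; [rewrite invr_ge0 ltW | rewrite aU in hW; lra].
have hlr : lam * sqd x2 y <= lam * (A + 2) ^+ 2.
  by apply: ler_wpM2l; [exact: ltW | lra].
have lamsq : lam ^+ 2 <= lam by rewrite expr2 ger_pMl.
have hA1 : 0 <= A + 1 by have A0 : 0 <= A := le_trans a0 aA; lra.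
have e3 : 4 * lam ^+ 2 * (A + 1) <= 4 * lam * (A + 1) by nra.
have e4 : lam * (A + 2) ^+ 2 + 12 * lam * (A + 1) <= lam * (A + 8) ^+ 2.
  rewrite -subr_ge0.
  have -> : lam * (A + 8) ^+ 2 - (lam * (A + 2) ^+ 2 + 12 * lam * (A + 1)) = lam * 48 by ring.
  by rewrite mulr_ge0 // ltW.
rewrite -/lam; move: hsplit; rewrite aU in hW.
rewrite !mulrDl !mul1r.
rewrite -/A; lra.
Qed.


Local Notation I := ('I_3 * 'I_d)%type.
Local Notation i0 := ((inord 2 : 'I_3), k0).

Definition mF (p : I -> R) := (p (ord0, k0) + p (inord 1, k0)) / 2.
Definition gF (p : I -> R) :=
  \sum_(k < d | k != k0) (p (inord 2, k) - p (ord0, k)) * (p (inord 2, k) - p (inord 1, k))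
  - ((p (ord0, k0) - p (inord 1, k0)) / 2) ^+ 2.

Lemma fF_split (p : I -> R) :
  \sum_(k < d) (p (inord 2, k) - p (ord0, k)) * (p (inord 2, k) - p (inord 1, k)) =
  (p i0 - mF p) ^+ 2 + gF p.
Proof. by rewrite (bigD1 k0) //= /gF /mF; field. Qed.

Lemma ne0 k : (ord0, k) != i0.
Proof. by rewrite xpair_eqE -val_eqE /= inordK. Qed.
Lemma ne1 k : (inord 1, k) != i0.
Proof. by rewrite xpair_eqE -val_eqE /= !inordK. Qed.
Lemma ne2 k : k != k0 -> (inord 2, k) != i0.
Proof. by move=> hk; rewrite xpair_eqE (negbTE hk) andbF. Qed.

Section Lip.
Variables (x p : I -> R) (B h : R).
Hypothesis hx : forall i, `|x i| <= B.
Hypothesis hp : forall i, i != i0 -> p i <= x i <= p i + h.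
Hypothesis h0 : 0 <= h.

Lemma lip1 i : i != i0 -> `|x i - p i| <= h /\ `|p i| <= B + h.
Proof.
move=> /hp /andP[a b]; have := hx i; rewrite !ler_norml => /andP[c e].
by split; apply/andP; split; lra.
Qed.

Lemma lip_m : `|mF x - mF p| <= h.
Proof.
have [a1 _] := lip1 _ (ne0 k0); have [a2 _] := lip1 _ (ne1 k0).
move: a1 a2; rewrite /mF !ler_norml => /andP[? ?] /andP[? ?].
by apply/andP; split; lra.
Qed.

Lemma lip_g : `|gF x - gF p| <= (8 * d%:R + 2) * h * (B + h).
Proof.
have hB : 0 <= B by apply: le_trans (hx i0).
rewrite /gF.
set Sx := \sum_(k < d | _) _. set Sp := \sum_(k < d | _) _.
have eq1 : Sx - ((x (ord0, k0) - x (inord 1, k0)) / 2) ^+ 2 -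
    (Sp - ((p (ord0, k0) - p (inord 1, k0)) / 2) ^+ 2) =
    (Sx - Sp) - (((x (ord0, k0) - x (inord 1, k0)) / 2) * ((x (ord0, k0) - x (inord 1, k0)) / 2)
      - ((p (ord0, k0) - p (inord 1, k0)) / 2) * ((p (ord0, k0) - p (inord 1, k0)) / 2)).
  by rewrite !expr2; ring.
rewrite eq1; apply: (le_trans (ler_normB _ _)).
have hS : `|Sx - Sp| <= d%:R * (8 * h * (B + h)).
  rewrite /Sx /Sp -sumrB; apply: (le_trans (ler_norm_sum _ _ _)).
  apply: (le_trans (y := \sum_(k < d | k != k0) (8 * h * (B + h)))).
    apply: ler_sum => k hk.
    have [a1 b1] := lip1 _ (ne0 k); have [a2 b2] := lip1 _ (ne1 k).
    have [a3 b3] := lip1 _ (ne2 _ hk).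
    have e1 : `|(x (inord 2, k) - x (ord0, k)) - (p (inord 2, k) - p (ord0, k))| <= 2 * h.
      move: a1 a3; rewrite !ler_norml => /andP[? ?] /andP[? ?]; apply/andP; split; lra.
    have e2 : `|(x (inord 2, k) - x (inord 1, k)) - (p (inord 2, k) - p (inord 1, k))| <= 2 * h.
      move: a2 a3; rewrite !ler_norml => /andP[? ?] /andP[? ?]; apply/andP; split; lra.
    have e3 : `|x (inord 2, k) - x (inord 1, k)| <= 2 * (B + h).
      have := hx (inord 2, k); have := hx (inord 1, k).
      rewrite !ler_norml => /andP[q1 q2] /andP[q3 q4]; apply/andP; split. - have := h0; lra.
      - have := h0; lra.
    have e4 : `|p (inord 2, k) - p (ord0, k)| <= 2 * (B + h).
      move: b1 b3; rewrite !ler_norml => /andP[? ?] /andP[? ?]; apply/andP; split; lra.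
    have := prod_lip _ _ _ _ _ _ e1 e2 e3 e4.
    by have -> : 2 * (2 * h) * (2 * (B + h)) = 8 * h * (B + h) by ring.
  have -> : d%:R * (8 * h * (B + h)) = \sum_(k < d) (8 * h * (B + h)).
    by rewrite sumr_const card_ord mulr_natl.
  rewrite [X in _ <= X](bigID (fun k => k != k0)) /= lerDl.
  apply: sumr_ge0 => k _; apply: mulr_ge0; first by apply: mulr_ge0.
  by apply: addr_ge0.
have hu : `|((x (ord0, k0) - x (inord 1, k0)) / 2) * ((x (ord0, k0) - x (inord 1, k0)) / 2)
      - ((p (ord0, k0) - p (inord 1, k0)) / 2) * ((p (ord0, k0) - p (inord 1, k0)) / 2)|
      <= 2 * h * (B + h).
  have [a1 b1] := lip1 _ (ne0 k0); have [a2 b2] := lip1 _ (ne1 k0).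
  have e1 : `|(x (ord0, k0) - x (inord 1, k0)) / 2 - (p (ord0, k0) - p (inord 1, k0)) / 2| <= h.
    move: a1 a2; rewrite !ler_norml => /andP[? ?] /andP[? ?]; apply/andP; split; lra.
  have e3 : `|(x (ord0, k0) - x (inord 1, k0)) / 2| <= B + h.
    have := hx (ord0, k0); have := hx (inord 1, k0).
    rewrite !ler_norml => /andP[? ?] /andP[? ?]; apply/andP; split; have := h0; lra.
  have e4 : `|(p (ord0, k0) - p (inord 1, k0)) / 2| <= B + h.
    move: b1 b2; rewrite !ler_norml => /andP[? ?] /andP[? ?]; apply/andP; split; lra.
  exact (prod_lip _ _ _ _ _ _ e1 e1 e3 e4).
have -> : (8 * d%:R + 2) * h * (B + h) = d%:R * (8 * h * (B + h)) + 2 * h * (B + h) by ring.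
exact: lerD.
Qed.
End Lip.

Lemma bad_cover (n : nat) (eps : R) (K : nat) :
  let B := powR (@s_plus R d n) (d%:R^-1) / 2 in
  let del := powR (n%:R) (-2 + eps) in
  let tau := Num.sqrt del * (d%:R * B + 8) ^+ 2 in
  let h := 2 * B / K%:R in
  let kap := (8 * d%:R + 2) * h * (B + h) in
  let l := Num.sqrt (tau + 2 * kap) + 2 * h in
  (0 < K)%N -> 0 < B -> 0 < del -> del <= 1 ->
  (lebesgue_outer (@bad_set R d n eps) <= (2 * (2 * B) ^+ (#|{: I}|.-1) * l)%:E)%E.
Proof.
move=> B del tau h kap l K0 B0 del0 del1.
have h0 : 0 < h by rewrite /h divr_gt0 ?ltr0n // mulr_gt0.
have kap0 : 0 <= kap.
  by rewrite /kap; apply: mulr_ge0; [apply: mulr_ge0; [|exact: ltW] | apply: addr_ge0; apply: ltW]; rewrite // addr_ge0 // mulr_ge0.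
have tau0 : 0 <= tau by rewrite /tau mulr_ge0 ?sqrtr_ge0 ?sqr_ge0.
have l0 : 0 < l by rewrite /l ltr_wpDl ?sqrtr_ge0 // mulr_gt0.
apply: (grid_cover _ i0 _ _ _ _ (fun s p => if s
    then mF p + Num.sqrt (- gF p - kap) - h
    else mF p - Num.sqrt (- gF p - kap) + h - l) K0 B0 l0).
move=> x [hW [hlt hle]].
have hx : forall i, `|x i| <= B by case=> j k; apply: (hW j k).
split.
  by move=> i; have := hx i; rewrite ler_norml.
move=> p pi0 hp.
have [f0 f1] := geom (triple x ord0) (triple x (inord 1)) (triple x (inord 2)) _ _
  (fun k => hW ord0 k) (fun k => hW (inord 1) k) del0 del1 hlt hle.
rewrite /triple fF_split in f0 f1.
have hm := lip_m _ _ _ _ hx hp.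
have hg := lip_g _ _ _ _ hx hp (ltW h0).
have := interval_lemma _ _ _ _ _ _ _ _ f0 f1 hm hg kap0 tau0.
rewrite -/kap -/l => -[H|H]; first by exists true.
by exists false; case/andP: H; rewrite -/h => q1 q2; apply/andP; split; lra.
Qed.

Lemma powle (a b : R) n : 0 <= a -> a <= b -> a ^+ n <= b ^+ n.
Proof.
move=> a0 ab; apply: lerXn2r => //; rewrite nnegrE //; exact: le_trans ab.
Qed.

Lemma Bval n : powR (@s_plus R d n) (d%:R^-1) / 2 = 3 * (ln (n%:R : R)) ^+ 2.
Proof.
rewrite /s_plus /s_n.
have h0 : 0 <= 3 * (2 * ln (n%:R : R) ^+ 2).
  by apply: mulr_ge0 => //; apply: mulr_ge0 => //; apply: sqr_ge0.
rewrite -(powR_mulrn _ h0) -powRrM mulfV; last by rewrite pnatr_eq0 -lt0n.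
by rewrite powRr1 //; field.
Qed.

Lemma ln_bound (x g : R) : 1 <= x -> 0 < g -> ln x + 1 <= (1 + g^-1) * x `^ g.
Proof.
move=> x1 g0.
have xg1 : 1 <= x `^ g by rewrite -(powRr0 x); apply: ler_powR => //; exact: ltW.
have hl : ln x <= g^-1 * x `^ g.
  have := ln_sublinear (lt_le_trans ltr01 xg1); rewrite ln_powR => hl.
  have -> : ln x = g^-1 * (g * ln x) by field; rewrite gt_eqF.
  by apply: ler_wpM2l; [rewrite invr_ge0 ltW | exact: ltW].
rewrite mulrDl mul1r; lra.
Qed.

Lemma asym (eps : R) : 0 < eps -> eps < 1 / 2 ->
  exists C : R, exists N : nat, forall n : nat, (N <= n)%N ->
  let B := powR (@s_plus R d n) (d%:R^-1) / 2 in
  let del := powR (n%:R) (-2 + eps) in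
  let tau := Num.sqrt del * (d%:R * B + 8) ^+ 2 in
  let h := 2 * B / (n ^ 8)%N%:R in
  let kap := (8 * d%:R + 2) * h * (B + h) in
  let l := Num.sqrt (tau + 2 * kap) + 2 * h in
  0 < B /\ 0 < del /\ del <= 1 /\
  2 * (2 * B) ^+ (3 * d).-1 * l <= C * powR (n%:R) (- (1 / 4)).
Proof.
move=> eps0 eps1.
pose g : R := (48 * d%:R)^-1.
have dR : 1 <= d%:R :> R by rewrite ler1n.
have g0 : 0 < g by rewrite /g invr_gt0; lra.
pose c3 := 1 + g^-1.
pose cd : R := 48 * (8 * d%:R + 2).
pose m := (3 * d).-1.
pose C := 2 * 2 ^+ m * (d%:R + 20 + cd) * (4 ^+ (3 * d) * c3 ^+ (6 * d)).
exists C, 3%N => n hn B del tau h kap l.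
set x : R := n%:R.
have x3 : 3 <= x by rewrite /x ler_nat.
have x1 : 1 <= x by lra.
have x0 : 0 < x by lra.
set lx := ln x.
have lx0 : 0 < lx by rewrite /lx ln_gt0 //; lra.
have lxx : lx <= x by apply: ltW; apply: ln_sublinear.
have hB : B = 3 * lx ^+ 2 by rewrite /B Bval.
have B0 : 0 < B by rewrite hB mulr_gt0 // exprn_gt0.
have del0 : 0 < del by rewrite /del powR_gt0.
have del1 : del <= 1.
  by rewrite /del -[X in _ <= X](powRr0 x); apply: ler_powR => //; lra.
do 3 (split => //).
pose q := x `^ (- (3 / 8)).
have q0 : 0 < q by rewrite /q powR_gt0.
have q1 : q <= 1 by rewrite /q -[X in _ <= X](powRr0 x); apply: ler_powR => //; lra.
have sd : Num.sqrt (Num.sqrt del) <= q.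
  rewrite -!powR12_sqrt ?powR_ge0 // /del -!powRrM /q; apply: ler_powR => //; lra.
have stau : Num.sqrt tau <= q * (d%:R * B + 8).
  rewrite /tau sqrtrM ?sqrtr_ge0 // sqrtr_sqr ger0_norm; last first.
    by rewrite addr_ge0 // mulr_ge0 // ?ler0n ltW.
  by apply: ler_wpM2r => //; rewrite addr_ge0 // mulr_ge0 // ?ler0n ltW.
have x8 : (n ^ 8)%N%:R = x ^+ 8 by rewrite natrX.
have Bx : B <= 3 * x ^+ 2.
  rewrite hB ler_wpM2l // powle //; exact: ltW.
have x4q : (x ^+ 4)^-1 <= q ^+ 2.
  have -> : q ^+ 2 = x `^ (- (3 / 4)).
    by rewrite /q -powR_mulrn ?powR_ge0 // -powRrM; congr (_ `^ _); field.
  have e : x `^ (- 4) = (x ^+ 4)^-1 by rewrite powRN powR_mulrn // ltW.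
  apply: (@le_trans _ _ (x `^ (- 4))); first by rewrite e.
  apply: ler_powR => //; lra.
have xp : forall k, 0 < x ^+ k by move=> k; rewrite exprn_gt0.
have x29 : 9 <= x ^+ 2 by rewrite expr2; nra.
have h0 : 0 <= h by rewrite /h x8 ltW // divr_gt0 ?xp // mulr_gt0.
have hh : h * x ^+ 2 <= 6 * (x ^+ 4)^-1.
  have e : 2 * B * x ^+ 2 <= 6 * x ^+ 4.
    have : B * x ^+ 2 <= 3 * x ^+ 2 * x ^+ 2 by apply: ler_wpM2r => //; rewrite ltW ?xp.
    have -> : x ^+ 4 = x ^+ 2 * x ^+ 2 by rewrite -exprD.
    lra.
  have -> : h * x ^+ 2 = (2 * B * x ^+ 2) * (x ^+ 8)^-1 by rewrite /h x8; ring.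
  have -> : 6 * (x ^+ 4)^-1 = (6 * x ^+ 4) * (x ^+ 8)^-1.
    by field; rewrite gt_eqF ?xp.
  by apply: ler_wpM2r => //; rewrite invr_ge0 ltW ?xp.
have i4 : (x ^+ 4)^-1 <= 1.
  rewrite invr_le1 ?xp //; first exact: exprn_ege1.
  by rewrite unitfE gt_eqF ?xp.
have i40 : 0 < (x ^+ 4)^-1 by rewrite invr_gt0 xp.
have hhx : h <= h * x ^+ 2 by rewrite ler_peMr //; lra.
have kapb : 2 * kap <= cd * q ^+ 2.
  apply: (le_trans (y := cd * (x ^+ 4)^-1)); last first.
    by apply: ler_wpM2l => //; rewrite /cd mulr_ge0 // addr_ge0 // mulr_ge0 // ler0n.
  rewrite /kap /cd.
  have hB1 : B + h <= 4 * x ^+ 2 by lra.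
  have e1 : h * (B + h) <= h * (4 * x ^+ 2) by apply: ler_wpM2l.
  have d8 : 0 <= 8 * d%:R + 2 :> R by lra.
  have e2 : h * (B + h) <= 24 * (x ^+ 4)^-1 by lra.
  have := ler_wpM2l d8 e2.
  rewrite -!mulrA; lra.
have cd1 : 1 <= cd by rewrite /cd; lra.
have skap : Num.sqrt (2 * kap) <= cd * q.
  have cq0 : 0 <= cd * q by apply: mulr_ge0; lra.
  rewrite -[cd * q](ger0_norm cq0).
  rewrite -sqrtr_sqr ler_sqrt ?sqr_ge0 // exprMn.
  apply: (le_trans kapb); apply: ler_wpM2r; first by rewrite sqr_ge0.
  by rewrite expr2 ler_peMr //; lra.
have hq : 2 * h <= 12 * q.
  have : q ^+ 2 <= q by rewrite expr2 ger_pMl.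
  lra.
have kap0 : 0 <= kap by rewrite /kap; apply: mulr_ge0; [apply: mulr_ge0|]; lra.
have tau0 : 0 <= tau by rewrite /tau mulr_ge0 ?sqrtr_ge0 ?sqr_ge0.
have hl : l <= q * (d%:R * B + 20 + cd).
  have := sqrt_add_le tau (2 * kap) tau0.
  rewrite /l; lra.
have B1 : 0 <= B + 1 by lra.
have e1 : (2 * B) ^+ m <= 2 ^+ m * (B + 1) ^+ m.
  by rewrite -exprMn powle //; lra.
have e2 : d%:R * B + 20 + cd <= (d%:R + 20 + cd) * (B + 1).
  have : 0 <= d%:R * B by rewrite mulr_ge0 ?ler0n // ltW.
  nra.
have lB : B + 1 <= 4 * (c3 * x `^ g) ^+ 2.
  have := ln_bound x g x1 g0; rewrite -/lx -/c3 => hlb.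
  apply: (le_trans (y := 4 * (lx + 1) ^+ 2)); first by rewrite hB; nra.
  by apply: ler_wpM2l => //; apply: powle => //; lra.
have e3 : (B + 1) ^+ (3 * d) <= 4 ^+ (3 * d) * c3 ^+ (6 * d) * x `^ (1 / 8).
  apply: (le_trans (powle _ _ (3 * d) B1 lB)).
  rewrite exprMn -exprM.
  have -> : (c3 * x `^ g) ^+ (2 * (3 * d)) = c3 ^+ (6 * d) * x `^ (1 / 8).
    rewrite exprMn mulnA; congr (_ * _).
    rewrite -powR_mulrn ?powR_ge0 // -powRrM; congr (_ `^ _).
    rewrite /g !natrM; field; rewrite gt_eqF //; lra.
  by rewrite mulrA.
have m1 : (m.+1 = 3 * d)%N by rewrite /m prednK // muln_gt0.
have qx : x `^ (1 / 8) * q = x `^ (- (1 / 4)).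
  rewrite /q -powRD; first by congr (_ `^ _); field.
  by apply/implyP => _; rewrite gt_eqF.
apply: (le_trans (y := 2 * (2 ^+ m * (B + 1) ^+ m) * (q * ((d%:R + 20 + cd) * (B + 1))))).
  apply: ler_pM; [| |apply: ler_wpM2l => // | apply: (le_trans hl); apply: ler_wpM2l; [exact: ltW|exact: e2]].
  - by apply: mulr_ge0 => //; apply: exprn_ge0; rewrite mulr_ge0 // ltW.
  - by rewrite /l addr_ge0 ?sqrtr_ge0 // mulr_ge0.
have -> : 2 * (2 ^+ m * (B + 1) ^+ m) * (q * ((d%:R + 20 + cd) * (B + 1))) =
  2 * 2 ^+ m * (d%:R + 20 + cd) * (B + 1) ^+ (3 * d) * q.
  by rewrite -m1 exprS; ring.
rewrite -qx /C mulrA.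
apply: ler_wpM2r; first exact: ltW.
rewrite -!mulrA; apply: ler_wpM2l => //; apply: ler_wpM2l; first exact: exprn_ge0.
by apply: ler_wpM2l; [lra | rewrite mulrA; exact: e3].
Qed.

Lemma main_sec (eps : R) : 0 < eps -> eps < 1 / 2 ->
  exists C : R, exists N : nat, forall n : nat, (N <= n)%N ->
    (lebesgue_outer (@bad_set R d n eps) <= (C * powR (n%:R) (- (1 / 4)))%:E)%E.
Proof.
move=> e0 e1.
have [C [N hCN]] := asym eps e0 e1.
exists C, (maxn N 1) => n; rewrite geq_max => /andP[hN hn1].
have [B0 [del0 [del1 hb]]] := hCN n hN.
have K0 : (0 < n ^ 8)%N by rewrite expn_gt0 hn1.
have hbc := bad_cover n eps (n ^ 8) K0 B0 del0 del1.
rewrite card_prod !card_ord in hbc.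
apply: (le_trans hbc); rewrite lee_fin; exact: hb.
Qed.

End Dim.
End All.

Theorem mainTheorem10 (R : realType) (d : nat) (hd : (2 <= d)%N) :
  exists eps0 : R, 0 < eps0 /\
  forall eps : R, 0 < eps -> eps < eps0 ->
  exists C : R, exists N : nat, forall n : nat, (N <= n)%N ->
    (lebesgue_outer (@bad_set R d n eps) <= (C * powR (n%:R) (- (1 / 4)))%:E)%E.
Proof.
have d1 : (1 <= d)%N by apply: leq_trans hd.
exists (1 / 2); split; first by rewrite divr_gt0.
move=> eps e0 e1.
exact: (@main_sec R d d1 (Ordinal d1) eps e0 e1).
Qed.
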